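(* Let $G$ be a $\lambda$-graph and $Q$ a query over $G$. Then $Q^{\Downarrow}$ is an open bisimulation if and only if $Q^{\#}$ is a sharing equivalence.
   Context: A pre-$\lambda$-graph is a directed graph whose nodes are of four kinds: an application node $@(n_1,n_2)$ has exactly two children, its left child $n_1$ and its right child $n_2$; an abstraction node $\lambda(n)$ has exactly one child, its body $n$; a free variable node has no children and carries an atom $\mathrm{id}(n)$ from a fixed set of atoms, distinct free variable nodes carrying distinct atoms; a bound variable node $\mathrm{var}(l)$ has exactly one outgoing binding edge, to an abstraction node $l$ (its binder). A trace is a finite sequence of directions from $\{\swarrow,\downarrow,\searrow\}$; $\epsilon$ is the empty trace and $d\cdot\tau$ is the trace $\tau$ extended by one final step $d$. Paths $n\xrightarrow{\tau}m$ are defined inductively: $n\xrightarrow{\epsilon}n$; if $n\xrightarrow{\tau}\lambda(m)$ then $n\xrightarrow{\downarrow\cdot\tau}m$; if $n\xrightarrow{\tau}@(m_1,m_2)$ then $n\xrightarrow{\swarrow\cdot\tau}m_1$ and $n\xrightarrow{\searrow\cdot\tau}m_2$ (binding edges are never followed). The path $n\xrightarrow{\tau}$ crosses a node $m$ if either $n\xrightarrow{\tau}m$, or $\tau=d\cdot\tau'$ and $n\xrightarrow{\tau'}$ crosses $m$. A root is a node $r$ such that the only path ending in $r$ has the empty trace. A node $m$ dominates $n$ if every path from a root to $n$ crosses $m$. A $\lambda$-graph is a pre-$\lambda$-graph that has finitely many nodes, is acyclic ($n\xrightarrow{\tau}n$ holds only for $\tau=\epsilon$), and is dominated (every bound variable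 node $\mathrm{var}(l)$ is dominated by its binder $l$). Two nodes are homogeneous if both are application nodes, or both abstraction nodes, or both free variable nodes, or both bound variable nodes; a binary relation $R$ on nodes is homogeneous if it only relates homogeneous nodes. Rules: $(\swarrow)$: $@(n_1,n_2)\,R\,@(m_1,m_2)$ implies $n_1\,R\,m_1$; $(\searrow)$: $@(n_1,n_2)\,R\,@(m_1,m_2)$ implies $n_2\,R\,m_2$; $(\downarrow)$: $\lambda(n)\,R\,\lambda(m)$ implies $n\,R\,m$; $(\circlearrowright)$: $\mathrm{var}(n)\,R\,\mathrm{var}(m)$ implies $n\,R\,m$. $R$ is propagated if closed under $(\swarrow),(\downarrow),(\searrow)$. $R$ is open if $n\,R\,m$ implies $n=m$ for all free variable nodes $n,m$. A bisimulation is a homogeneous propagated relation closed also under $(\circlearrowright)$. A sharing equivalence is an open bisimulation that is an equivalence relation. $R^{\Downarrow}$ (propagation) is the smallest propagated relation containing $R$; $R^{\#}$ (spreading) is the smallest propagated equivalence relation containing $R$. A query over $G$ is a binary relation on the roots of $G$. *)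

(* Defs.v *)
From mathcomp Require Import all_boot.
From Stdlib Require Import List.

Set Implicit Arguments.
Unset Strict Implicit.
Unset Printing Implicit Defensive.

(* The label of a node: its kind and its outgoing edges.
   [App n1 n2]  : application node @(n1,n2)
   [Abs n]      : abstraction node lambda(n)
   [FVar a]     : free variable node with atom a
   [BVar l]     : bound variable node var(l), binding edge to l *)
Inductive node_kind (V A : Type) : Type :=
  | App of V & V
  | Abs of V
  | FVar of A
  | BVar of V.
Arguments App {V A}. Arguments Abs {V A}. Arguments FVar {V A}. Arguments BVar {V A}.

Definition graph (V A : Type) := V -> node_kind V A.

Section Defs.
Variables (V : finType) (A : Type) (G : graph V A).

Definition is_abs (n : V) : Prop := exists b, G n = Abs b.

Definition pre_lambda_graph : Prop :=
  (forall v l, G v = BVar l -> is_abs l) /\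
  (forall n m a b, G n = FVar a -> G m = FVar b -> a = b -> n = m).

Inductive dir := DSW | DDown | DSE.

(* traces: [d :: tau] is the trace tau extended by one final step d *)
Definition trace := list dir.

Inductive path : V -> trace -> V -> Prop :=
  | path_nil n : path n nil n
  | path_down n tau m b : path n tau m -> G m = Abs b -> path n (DDown :: tau) b
  | path_sw n tau m m1 m2 : path n tau m -> G m = App m1 m2 -> path n (DSW :: tau) m1
  | path_se n tau m m1 m2 : path n tau m -> G m = App m1 m2 -> path n (DSE :: tau) m2.

Inductive crosses : V -> trace -> V -> Prop :=
  | crosses_here n tau m : path n tau m -> crosses n tau m
  | crosses_before n d tau m : crosses n tau m -> crosses n (d :: tau) m.

Definition is_root (r : V) : Prop := forall n tau, path n tau r -> tau = nil.

Definition dominates (m n : V) : Prop :=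
  forall r tau, is_root r -> path r tau n -> crosses r tau m.

Definition acyclic : Prop := forall n tau, path n tau n -> tau = nil.

Definition dominated : Prop := forall v l, G v = BVar l -> dominates l v.

(* finiteness of nodes is given by V being a finType *)
Definition lambda_graph : Prop := pre_lambda_graph /\ acyclic /\ dominated.

Definition rel := V -> V -> Prop.

Definition homogeneous_nodes (n m : V) : Prop :=
  match G n, G m with
  | App _ _, App _ _ | Abs _, Abs _ | FVar _, FVar _ | BVar _, BVar _ => True
  | _, _ => False
  end.

Definition homogeneous (R : rel) : Prop := forall n m, R n m -> homogeneous_nodes n m.

Definition rule_sw (R : rel) : Prop :=
  forall v w n1 n2 m1 m2, G v = App n1 n2 -> G w = App m1 m2 -> R v w -> R n1 m1.
Definition rule_se (R : rel) : Prop :=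
  forall v w n1 n2 m1 m2, G v = App n1 n2 -> G w = App m1 m2 -> R v w -> R n2 m2.
Definition rule_down (R : rel) : Prop :=
  forall v w n m, G v = Abs n -> G w = Abs m -> R v w -> R n m.
Definition rule_bind (R : rel) : Prop :=
  forall v w n m, G v = BVar n -> G w = BVar m -> R v w -> R n m.

Definition propagated (R : rel) : Prop := rule_sw R /\ rule_down R /\ rule_se R.

Definition open_rel (R : rel) : Prop :=
  forall n m a b, G n = FVar a -> G m = FVar b -> R n m -> n = m.

Definition bisimulation (R : rel) : Prop :=
  homogeneous R /\ propagated R /\ rule_bind R.

Definition equivalence_rel (R : rel) : Prop :=
  (forall x, R x x) /\ (forall x y, R x y -> R y x) /\
  (forall x y z, R x y -> R y z -> R x z).

Definition sharing_equivalence (R : rel) : Prop :=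
  open_rel R /\ bisimulation R /\ equivalence_rel R.

Definition subrel (R S : rel) : Prop := forall x y, R x y -> S x y.

(* R^{Downarrow}: smallest propagated relation containing R *)
Definition propagation (R : rel) : rel :=
  fun x y => forall S : rel, subrel R S -> propagated S -> S x y.

(* R^{#}: smallest propagated equivalence relation containing R *)
Definition spreading (R : rel) : rel :=
  fun x y => forall S : rel, subrel R S -> propagated S -> equivalence_rel S -> S x y.

Definition query (Q : rel) : Prop := forall x y, Q x y -> is_root x /\ is_root y.

End Defs.

(* Main.v *)
Require Import Defs.
From mathcomp Require Import all_boot.
From Stdlib Require Import List ClassicalEpsilon.
Set Implicit Arguments.
Unset Strict Implicit.

Definition okr (V:finType) (A:Type) (G:graph V A) (R : V -> V -> Prop) (x y : V) : Prop :=
  match G x, G y with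
  | App a b, App c d => R a c /\ R b d
  | Abs a, Abs c => R a c
  | FVar _, FVar _ => x = y
  | BVar a, BVar c => R a c
  | _, _ => False end.

Lemma okr_mono (V:finType) (A:Type) (G:graph V A) (R S : V -> V -> Prop) x y :
  (forall x y, R x y -> S x y) -> okr G R x y -> okr G S x y.
Proof. intro H; unfold okr; destruct (G x), (G y); intuition. Qed.

Lemma okr_refl (V:finType) (A:Type) (G:graph V A) (R : V -> V -> Prop) x :
  (forall x, R x x) -> okr G R x x.
Proof. intro H; unfold okr; destruct (G x); auto. Qed.

Lemma okr_sym (V:finType) (A:Type) (G:graph V A) (R : V -> V -> Prop) x y :
  (forall x y, R x y -> R y x) -> okr G R x y -> okr G R y x.
Proof. intro H; unfold okr; destruct (G x), (G y); intuition. Qed.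

Lemma okr_trans (V:finType) (A:Type) (G:graph V A) (R : V -> V -> Prop) x y z :
  (forall x y z, R x y -> R y z -> R x z) -> okr G R x y -> okr G R y z -> okr G R x z.
Proof. intro H; unfold okr; destruct (G x), (G y), (G z); intuition; eauto; congruence. Qed.

Inductive eqc (V : Type) (R : V -> V -> Prop) : V -> V -> Prop :=
  | ec_base x y : R x y -> eqc R x y
  | ec_refl x : eqc R x x
  | ec_sym x y : eqc R x y -> eqc R y x
  | ec_trans x y z : eqc R x y -> eqc R y z -> eqc R x z.

Lemma eqc_ok (V:finType) (A:Type) (G:graph V A) (R : V -> V -> Prop) :
  (forall x y, R x y -> okr G R x y) -> forall x y, eqc R x y -> okr G (eqc R) x y.
Proof.
  intros H x y E; induction E.
  - apply: okr_mono (H _ _ H0). intros; by apply ec_base.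
  - apply okr_refl; intros; apply ec_refl.
  - apply okr_sym => //; intros; by apply ec_sym.
  - apply: okr_trans IHE1 IHE2; intros; by eapply ec_trans; eauto.
Qed.

Lemma ok_props (V:finType) (A:Type) (G:graph V A) (R : V -> V -> Prop) :
  (forall x y, R x y -> okr G R x y) ->
  homogeneous G R /\ propagated G R /\ rule_bind G R /\ open_rel G R.
Proof.
  intro H; split; [|split; [split; [|split]|split]].
  - intros n m Hr; have := H _ _ Hr; unfold okr, homogeneous_nodes;
      destruct (G n), (G m); tauto.
  - intros v w n1 n2 m1 m2 Hv Hw Hr; have := H _ _ Hr; rewrite /okr Hv Hw; tauto.
  - intros v w n m Hv Hw Hr; have := H _ _ Hr; rewrite /okr Hv Hw; tauto.
  - intros v w n1 n2 m1 m2 Hv Hw Hr; have := H _ _ Hr; rewrite /okr Hv Hw; tauto.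
  - intros v w n m Hv Hw Hr; have := H _ _ Hr; rewrite /okr Hv Hw; tauto.
  - intros v w n m Hv Hw Hr; have := H _ _ Hr; rewrite /okr Hv Hw; tauto.
Qed.

Lemma ok_of (V:finType) (A:Type) (G:graph V A) (R : V -> V -> Prop) :
  homogeneous G R -> propagated G R -> rule_bind G R -> open_rel G R ->
  forall x y, R x y -> okr G R x y.
Proof.
  move=> Hh [Hsw [Hd Hse]] Hb Ho x y Hr.
  have Hn := Hh _ _ Hr; move: Hn; rewrite /okr /homogeneous_nodes.
  case Ex: (G x) => [a b|a|a|a]; case Ey: (G y) => [c d|c|c|c] //= _.
  - split; [exact: Hsw Ex Ey Hr | exact: Hse Ex Ey Hr].
  - exact: Hd Ex Ey Hr.
  - exact: Ho Ex Ey Hr.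
  - exact: Hb Ex Ey Hr.
Qed.

Lemma path_app (V:finType) (A:Type) (G:graph V A) y t2 z :
  Defs.path G y t2 z -> forall x t1, Defs.path G x t1 y -> Defs.path G x (t2 ++ t1) z.
Proof.
  induction 1; intros; simpl; auto.
  - eapply path_down; eauto.
  - eapply path_sw; eauto.
  - eapply path_se; eauto.
Qed.

Lemma path_split (V:finType) (A:Type) (G:graph V A) x b t :
  forall z, Defs.path G x (b ++ t) z -> exists y, Defs.path G x t y /\ Defs.path G y b z.
Proof.
  induction b as [|d b IH]; intros z H.
  - exists z; split; [exact H| constructor].
  - simpl in H; inversion H; subst;
      destruct (IH _ H3) as [y [H1 H2]]; exists y; split; auto; econstructor; eauto.
Qed.

Lemma crosses_split (V:finType) (A:Type) (G:graph V A) r t n :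
  Defs.crosses G r t n -> exists a t1, t = a ++ t1 /\ Defs.path G r t1 n.
Proof.
  induction 1.
  - exists nil, tau; auto.
  - destruct IHcrosses as [a [t1 [-> Hp]]]; exists (d :: a), t1; auto.
Qed.

Lemma app_cases (T : Type) (a1 t1 a2 t2 : list T) :
  a1 ++ t1 = a2 ++ t2 -> (exists b, t2 = b ++ t1) \/ (exists b, t1 = b ++ t2).
Proof.
  revert a2; induction a1 as [|x a1 IH]; intros a2 H.
  - right; exists a2; exact H.
  - destruct a2 as [|y a2].
    + left; exists (x :: a1); simpl in *; auto.
    + simpl in H; injection H; intros; eauto.
Qed.

Definition pb (P : Prop) : bool := if excluded_middle_informative P then true else false.
Lemma pbP (P : Prop) : pb P = true <-> P.
Proof. unfold pb; destruct (excluded_middle_informative P); split; auto; discriminate. Qed.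

Definition reach (V:finType) (A:Type) (G:graph V A) (x : V) : {set V} :=
  [set z | pb (exists d, d <> nil /\ Defs.path G x d z)].

Lemma reach_lt (V:finType) (A:Type) (G:graph V A) x d y :
  Defs.acyclic G -> Defs.path G x d y -> d <> nil -> #|reach G y| < #|reach G x|.
Proof.
  move=> Hac Hp Hd; apply: proper_card; apply/properP; split.
  - apply/subsetP => z; rewrite !inE => /pbP [d' [Hd' Hp']].
    apply/pbP; exists (d' ++ d); split; [by destruct d' | exact: path_app Hp' _ _ Hp].
  - exists y; rewrite inE; first by apply/pbP; eauto.
    apply/negP => /pbP [d' [Hd' Hp']]; by apply Hd', (Hac _ _ Hp').
Qed.

Lemma transfer (V:finType) (A:Type) (G:graph V A) (E : V -> V -> Prop) :
  (forall x y, E x y -> okr G E x y) ->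
  forall x d z, Defs.path G x d z -> forall y, E x y -> exists w, Defs.path G y d w /\ E z w.
Proof.
  move=> Hok x d z; elim => {x d z}.
  - move=> n y H; exists y; split => //; constructor.
  - move=> n tau m b Hp IH Hm y Hy; case: (IH _ Hy) => w [Hw Emw].
    have := Hok _ _ Emw; rewrite /okr Hm; case Ew: (G w) => // H.
    eexists; split; [eapply path_down; eauto | exact H].
  - move=> n tau m m1 m2 Hp IH Hm y Hy; case: (IH _ Hy) => w [Hw Emw].
    have := Hok _ _ Emw; rewrite /okr Hm; case Ew: (G w) => // - [H1 H2].
    eexists; split; [eapply path_sw; eauto | exact H1].
  - move=> n tau m m1 m2 Hp IH Hm y Hy; case: (IH _ Hy) => w [Hw Emw].
    have := Hok _ _ Emw; rewrite /okr Hm; case Ew: (G w) => // - [H1 H2].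
    eexists; split; [eapply path_se; eauto | exact H2].
Qed.

Lemma descent (V:finType) (A:Type) (G:graph V A) (E : V -> V -> Prop) :
  Defs.acyclic G -> (forall x y, E x y -> okr G E x y) ->
  forall N x y d, #|reach G x| <= N -> Defs.path G x d y -> d <> nil -> E x y -> False.
Proof.
  move=> Hac Hok; elim => [|N IH] x y d HN Hp Hd Exy.
  - have := leq_trans (reach_lt Hac Hp Hd) HN; by rewrite ltn0.
  - case: (transfer Hok Hp Exy) => w [Hw Eyw].
    apply: (IH y w d) => //.
    have := leq_trans (reach_lt Hac Hp Hd) HN; by rewrite ltnS.
Qed.

Lemma prop_char (V:finType) (A:Type) (G:graph V A) Q x y :
  propagation G Q x y -> exists r s t, Q r s /\ Defs.path G r t x /\ Defs.path G s t y.
Proof.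
  move=> H; apply: (H (fun x y => exists r s t, Q r s /\ Defs.path G r t x /\ Defs.path G s t y)).
  - move=> a b Hq; exists a, b, nil; repeat split => //; constructor.
  - split; [|split].
    + move=> v w n1 n2 m1 m2 Hv Hw [r [s [t [Hq [H1 H2]]]]].
      exists r, s, (DSW :: t); repeat split => //; eapply path_sw; eauto.
    + move=> v w n m Hv Hw [r [s [t [Hq [H1 H2]]]]].
      exists r, s, (DDown :: t); repeat split => //; eapply path_down; eauto.
    + move=> v w n1 n2 m1 m2 Hv Hw [r [s [t [Hq [H1 H2]]]]].
      exists r, s, (DSE :: t); repeat split => //; eapply path_se; eauto.
Qed.

Lemma prop_of_paths (V:finType) (A:Type) (G:graph V A) Q r s t x :
  Q r s -> Defs.path G r t x -> forall y, Defs.path G s t y -> propagation G Q x y.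
Proof.
  move=> Hq Hx y Hy S HS [Hsw [Hd Hse]].
  move: y Hy Hq; elim: Hx => {t x}.
  - move=> n y Hy Hq; inversion Hy; subst; by apply HS.
  - move=> n tau m b Hp IH Hm y Hy Hq; inversion Hy; subst.
    by eapply Hd; [exact Hm| eassumption | apply IH].
  - move=> n tau m m1 m2 Hp IH Hm y Hy Hq; inversion Hy; subst.
    by eapply Hsw; [exact Hm| eassumption | apply IH].
  - move=> n tau m m1 m2 Hp IH Hm y Hy Hq; inversion Hy; subst.
    by eapply Hse; [exact Hm| eassumption | apply IH].
Qed.

Theorem mainTheorem15 (V : finType) (A : Type) (G : graph V A)
  (HG : lambda_graph G) (Q : V -> V -> Prop) (HQ : query G Q) :
  (open_rel G (propagation G Q) /\ bisimulation G (propagation G Q)) <->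
  sharing_equivalence G (spreading G Q).
Proof.
  split.
  - move=> [Ho [Hh [Hp Hb]]].
    set P := propagation G Q.
    have HokP := ok_of Hh Hp Hb Ho.
    have HokE := eqc_ok HokP.
    have [_ [HpE _]] := ok_props HokE.
    have Hs2e : forall x y, spreading G Q x y -> eqc P x y.
      move=> x y H; apply: H.
      + move=> a b Hq; apply: ec_base => S HS _; exact: HS.
      + exact: HpE.
      + split; [exact: ec_refl | split; [exact: ec_sym | exact: ec_trans]].
    have He2s : forall x y, eqc P x y -> spreading G Q x y.
      move=> x y; elim => {x y}.
      + move=> x y H S HS Hps Heq; exact: H S HS Hps.
      + move=> x S _ _ [Hr _]; exact: Hr.
      + move=> x y _ IH S HS Hps Heq; have [_ [Hsy _]] := Heq; apply: Hsy; exact: IH S HS Hps Heq.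
      + move=> x y z _ IH1 _ IH2 S HS Hps Heq; have [_ [_ Ht]] := Heq;
          apply: Ht; [exact: IH1 S HS Hps Heq| exact: IH2 S HS Hps Heq].
    have HokS : forall x y, spreading G Q x y -> okr G (spreading G Q) x y.
      move=> x y H; apply: okr_mono He2s _; exact: HokE _ _ (Hs2e _ _ H).
    have [Hh' [Hp' [Hb' Ho']]] := ok_props HokS.
    split => //; split => //; split.
    + move=> x; exact: He2s _ _ (ec_refl _ x).
    + split.
      * move=> x y H; apply He2s, ec_sym, Hs2e, H.
      * move=> x y z H1 H2; apply: He2s (ec_trans (Hs2e _ _ H1) (Hs2e _ _ H2)).
  - move=> [HoE [[HhE [HpE HbE]] [HrE [HsE HtE]]]].
    set E := spreading G Q.
    have HokE := ok_of HhE HpE HbE HoE.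
    have HPE : forall x y, propagation G Q x y -> E x y.
      move=> x y H S HS Hps _; exact: H.
    split; [|split; [|split]].
    + move=> n m a b Hn Hm H; exact: HoE Hn Hm (HPE _ _ H).
    + move=> n m H; exact: HhE _ _ (HPE _ _ H).
    + split; [|split].
      * move=> v w n1 n2 m1 m2 Hv Hw H S HS Hps.
        have := Hps; case=> [Hsw _]; exact: Hsw Hv Hw (H S HS Hps).
      * move=> v w n m Hv Hw H S HS Hps.
        have := Hps; case=> [_ [Hd _]]; exact: Hd Hv Hw (H S HS Hps).
      * move=> v w n1 n2 m1 m2 Hv Hw H S HS Hps.
        have := Hps; case=> [_ [_ Hse]]; exact: Hse Hv Hw (H S HS Hps).
    + move=> v w n m Hv Hw HP.
      have Enm : E n m := HbE _ _ _ _ Hv Hw (HPE _ _ HP).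
      case: (prop_char HP) => r [s [t [Hq [Hrv Hsw]]]].
      case: (HQ _ _ Hq) => Hr Hs.
      case: HG => _ [Hac Hdom].
      case: (crosses_split (Hdom _ _ Hv _ _ Hr Hrv)) => a1 [t1 [Ht1 Hrn]].
      case: (crosses_split (Hdom _ _ Hw _ _ Hs Hsw)) => a2 [t2 [Ht2 Hsm]].
      rewrite Ht1 in Ht2.
      case: (app_cases Ht2) => [[b Hb]|[b Hb]].
      * subst t2; case: (path_split Hsm) => m' [Hsm' Hm'm].
        destruct b as [|d b].
        -- inversion Hm'm; subst; exact: prop_of_paths Hq Hrn _ Hsm'.
        -- exfalso.
           have Enm' : E n m' := HPE _ _ (prop_of_paths Hq Hrn Hsm').
           apply: (descent Hac HokE (leqnn _) Hm'm) => //.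
           exact: HtE (HsE _ _ Enm') Enm.
      * subst t1; case: (path_split Hrn) => n' [Hrn' Hn'n].
        destruct b as [|d b].
        -- inversion Hn'n; subst; exact: prop_of_paths Hq Hrn' _ Hsm.
        -- exfalso.
           have En'm : E n' m := HPE _ _ (prop_of_paths Hq Hrn' Hsm).
           apply: (descent Hac HokE (leqnn _) Hn'n) => //.
           exact: HtE En'm (HsE _ _ Enm).
Qed.
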